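(* Let $\mathcal{A}$ be a nice GFG-tNCW that is minimal, i.e., $|\mathcal{A}|\le|\mathcal{B}|$ for every GFG-tNCW $\mathcal{B}$ with $L(\mathcal{B})=L(\mathcal{A})$. Then $\mathcal{A}$ is safe-centralized and safe-minimal.
   Context: A tNCW (transition-based nondeterministic co-Büchi word automaton) is $\mathcal{A}=\langle\Sigma,Q,q_0,\delta,\alpha\rangle$, where $\Sigma$ is a finite alphabet, $Q$ a finite set of states, $q_0\in Q$ the initial state, $\delta:Q\times\Sigma\to 2^Q\setminus\{\emptyset\}$ the transition function, with induced transition relation $\Delta=\{\langle q,\sigma,s\rangle: s\in\delta(q,\sigma)\}$, and $\alpha\subseteq\Delta$. The size $|\mathcal{A}|$ is $|Q|$. Transitions in $\alpha$ are $\alpha$-transitions, those in $\Delta\setminus\alpha$ are $\bar\alpha$-transitions; $\delta^{\alpha}(q,\sigma)=\{s:\langle q,\sigma,s\rangle\in\alpha\}$ and $\delta^{\bar\alpha}(q,\sigma)=\{s:\langle q,\sigma,s\rangle\in\Delta\setminus\alpha\}$. A run on $w=\sigma_1\sigma_2\cdots$ is $r_0r_1\cdots$ with $r_0=q_0$ and $r_{i+1}\in\delta(r_i,\sigma_{i+1})$; it is accepting iff it traverses $\alpha$-transitions only finitely often; $L(\mathcal{A})$ is the set of words with an accepting run. $\mathcal{A}^q$ is $\mathcal{A}$ with initial state $q$. States $q,s$ are equivalent, $q\sim s$, if $L(\mathcal{A}^q)=L(\mathcal{A}^s)$. $\mathcal{A}$ is GFG if there is $f:\Sigma^*\to Q$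 with $f(\epsilon)=q_0$, $\langle f(u),\sigma,f(u\sigma)\rangle\in\Delta$ for all $u\in\Sigma^*,\sigma\in\Sigma$, and such that for every $w\in L(\mathcal{A})$ the run $f(w[1,0]),f(w[1,1]),f(w[1,2]),\dots$ is accepting (where $w[1,i]$ is the length-$i$ prefix). A state $q$ is GFG if $\mathcal{A}^q$ is GFG. $\mathcal{A}$ is semantically deterministic if for all $q,\sigma$, all states in $\delta(q,\sigma)$ are pairwise equivalent; safe deterministic if $|\delta^{\bar\alpha}(q,\sigma)|\le 1$ for all $q,\sigma$. The safe components of $\mathcal{A}$ are the strongly connected components of the graph on $Q$ with an edge $q\to q'$ iff $q'\in\delta^{\bar\alpha}(q,\sigma)$ for some $\sigma$. $\mathcal{A}$ is normal if whenever there is a path of $\bar\alpha$-transitions from $q$ to $s$, there is also one from $s$ to $q$. $\mathcal{A}$ is nice if all its states are reachable from $q_0$ and GFG, and $\mathcal{A}$ is normal, safe deterministic and semantically deterministic. A run is safe if it traverses no $\alpha$-transition; $L_{safe}(\mathcal{A}^q)$ is the set of infinite words having a safe run from $q$. Write $q\approx s$ if $q\sim s$ and $L_{safe}(\mathcal{A}^q)=L_{safe}(\mathcal{A}^s)$, and $q\precsim s$ if $q\sim s$ and $L_{safe}(\mathcal{A}^q)\subseteq L_{safe}(\mathcal{A}^s)$. $\mathcal{A}$ is safe-minimal if it has no two distinct states $q\approx s$; safe-centralized if $q\precsim s$ implies that $q$ and $s$ lie in the same safe component. *)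

(* Defs.v *)
From mathcomp Require Import all_boot.
Set Implicit Arguments. Unset Strict Implicit. Unset Printing Implicit Defensive.

(* A tNCW over alphabet Sigma with (finite) state type Q.
   alpha is the set of alpha-transitions, given as a boolean predicate on
   triples; only its restriction to the transition relation Delta matters. *)
Record tNCW (Sigma Q : finType) := TNCW {
  q0 : Q;
  delta : Q -> Sigma -> {set Q};
  alpha : Q -> Sigma -> Q -> bool;
  delta_ne : forall q a, delta q a != set0
}.

Section Defs.
Variables (Sigma Q : finType) (A : tNCW Sigma Q).

(* infinite words w = sigma_1 sigma_2 ... are functions nat -> Sigma,
   with w i = sigma_{i+1} *)
Definition word := nat -> Sigma.

Definition is_run (q : Q) (w : word) (r : nat -> Q) : Prop :=
  r 0 = q /\ forall i, r i.+1 \in delta A (r i) (w i).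

Definition accepting_run (w : word) (r : nat -> Q) : Prop :=
  exists N, forall i, N <= i -> ~~ alpha A (r i) (w i) (r i.+1).

Definition lang_from (q : Q) (w : word) : Prop :=
  exists r, is_run q w r /\ accepting_run w r.

Definition lang (w : word) : Prop := lang_from (q0 A) w.

Definition safe_lang_from (q : Q) (w : word) : Prop :=
  exists r, is_run q w r /\ forall i, ~~ alpha A (r i) (w i) (r i.+1).

Definition prefix (w : word) (i : nat) : seq Sigma := mkseq w i.

Definition GFG_state (q : Q) : Prop :=
  exists f : seq Sigma -> Q,
    f [::] = q /\
    (forall u a, f (rcons u a) \in delta A (f u) a) /\
    (forall w, lang_from q w -> accepting_run w (fun i => f (prefix w i))).

Definition GFG : Prop := GFG_state (q0 A).

Definition equiv_st (q s : Q) : Prop := forall w, lang_from q w <-> lang_from s w.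

Definition safe_equiv (q s : Q) : Prop :=
  equiv_st q s /\ forall w, safe_lang_from q w <-> safe_lang_from s w.

Definition safe_le (q s : Q) : Prop :=
  equiv_st q s /\ forall w, safe_lang_from q w -> safe_lang_from s w.

Definition delta_safe (q : Q) (a : Sigma) : {set Q} :=
  [set s in delta A q a | ~~ alpha A q a s].

Definition sem_det : Prop :=
  forall q a s s', s \in delta A q a -> s' \in delta A q a -> equiv_st s s'.

Definition safe_det : Prop := forall q a, #|delta_safe q a| <= 1.

Definition safe_edge : rel Q := fun q q' => [exists a, q' \in delta_safe q a].

Definition trans_edge : rel Q := fun q q' => [exists a, q' \in delta A q a].

Definition normal : Prop :=
  forall q s, connect safe_edge q s -> connect safe_edge s q.

Definition same_safe_comp (q s : Q) : Prop :=
  connect safe_edge q s /\ connect safe_edge s q.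

Definition nice : Prop :=
  (forall q, connect trans_edge (q0 A) q) /\
  (forall q, GFG_state q) /\
  normal /\ safe_det /\ sem_det.

Definition safe_minimal : Prop := forall q s, safe_equiv q s -> q = s.

Definition safe_centralized : Prop :=
  forall q s, safe_le q s -> same_safe_comp q s.

End Defs.

Definition minimal_GFG (Sigma Q : finType) (A : tNCW Sigma Q) : Prop :=
  forall (Q' : finType) (B : tNCW Sigma Q'),
    GFG B -> (forall w, lang B w <-> lang A w) -> #|Q| <= #|Q'|.

(* Main.v *)
Require Import Defs.
From mathcomp Require Import all_boot.
From Stdlib Require Import ClassicalEpsilon.
Set Implicit Arguments. Unset Strict Implicit. Unset Printing Implicit Defensive.

Definition pb (P : Prop) : bool := if excluded_middle_informative P then true else false.
Lemma pbP P : reflect P (pb P).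
Proof. rewrite /pb; case: excluded_middle_informative => H; constructor; done. Qed.

Definition wcons (Sigma : Type) (a : Sigma) (w : nat -> Sigma) : nat -> Sigma :=
  fun i => if i is j.+1 then w j else a.

Section Basics.
Variables (Sigma Q : finType) (A : tNCW Sigma Q).

Notation L := (lang_from A).
Notation Ls := (safe_lang_from A).

Lemma lang_ext x (w w' : nat -> Sigma) : (forall i, w i = w' i) -> L x w -> L x w'.
Proof.
move=> E [r [[r0 rr] [N HN]]]; exists r; split; [split=> // i; rewrite -E //|].
by exists N => i Hi; rewrite -E; apply: HN.
Qed.

Lemma safe_ext x (w w' : nat -> Sigma) : (forall i, w i = w' i) -> Ls x w -> Ls x w'.
Proof.
move=> E [r [[r0 rr] HN]]; exists r; split; [split=> // i; rewrite -E //|].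
by move=> i; rewrite -E; apply: HN.
Qed.

Lemma lang_cons x y a w : y \in delta A x a -> L y w -> L x (wcons a w).
Proof.
move=> Hy [r [[r0 rr] [N HN]]].
exists (fun i => if i is j.+1 then r j else x); split; first split=> //.
  by case=> [|i] /=; [rewrite r0|apply: rr].
by exists N.+1 => [[|i]] //= Hi; apply: HN.
Qed.

Lemma lang_uncons x a w : L x (wcons a w) -> exists2 y, y \in delta A x a & L y w.
Proof.
move=> [r [[r0 rr] [N HN]]]; exists (r 1); first by rewrite -r0; apply: (rr 0).
exists (fun i => r i.+1); split; first by split=> // i; apply: (rr i.+1).
by exists N => i Hi; apply: (HN i.+1); apply: leqW.
Qed.

Lemma safe_cons x y a w : y \in delta_safe A x a -> Ls y w -> Ls x (wcons a w).
Proof.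
rewrite inE => /andP [Hy Ha] [r [[r0 rr] HN]].
exists (fun i => if i is j.+1 then r j else x); split; first split=> //.
  by case=> [|i] /=; [rewrite r0|apply: rr].
by case=> [|i] //=; rewrite r0.
Qed.

Lemma safe_uncons x a w : Ls x (wcons a w) -> exists2 y, y \in delta_safe A x a & Ls y w.
Proof.
move=> [r [[r0 rr] HN]]; exists (r 1).
  by rewrite inE -r0 (rr 0) /=; apply: (HN 0).
exists (fun i => r i.+1); split; first by split=> // i; apply: (rr i.+1).
by move=> i; apply: (HN i.+1).
Qed.

Lemma safe_uniq x a y1 y2 : safe_det A -> y1 \in delta_safe A x a -> y2 \in delta_safe A x a -> y1 = y2.
Proof.
move=> sd H1 H2; have := sd x a => /card_le1_eqP H; exact: H.
Qed.

Lemma safe_uncons_det x a y w : safe_det A -> y \in delta_safe A x a ->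
  Ls x (wcons a w) -> Ls y w.
Proof.
move=> sd Hy /safe_uncons [y' Hy' Hw]; by rewrite (safe_uniq sd Hy Hy').
Qed.

Lemma safe_in_delta x a y : y \in delta_safe A x a -> y \in delta A x a.
Proof. by rewrite inE => /andP []. Qed.

Lemma eqv_refl x : equiv_st A x x. Proof. by []. Qed.
Lemma eqv_sym x y : equiv_st A x y -> equiv_st A y x.
Proof. by move=> H w; split=> /H. Qed.
Lemma eqv_trans x y z : equiv_st A x y -> equiv_st A y z -> equiv_st A x z.
Proof. by move=> H1 H2 w; split=> [/H1/H2|/H2/H1]. Qed.

Lemma sem_step x x' a y y' : sem_det A -> equiv_st A x x' ->
  y \in delta A x a -> y' \in delta A x' a -> equiv_st A y y'.
Proof.
move=> sd E Hy Hy'.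
suff K : forall x x' y y', equiv_st A x x' -> y \in delta A x a -> y' \in delta A x' a ->
   forall w, L y w -> L y' w.
  by move=> w; split; [exact: (K _ _ _ _ E Hy Hy' w)|exact: (K _ _ _ _ (eqv_sym E) Hy' Hy w)].
move=> {}x {}x' {}y {}y' {}E {}Hy {}Hy' w Hw.
have /E := lang_cons Hy Hw => /lang_uncons [z Hz Hzw].
by apply/(sd _ _ _ _ Hz Hy').
Qed.

Lemma safe_le_refl x : safe_le A x x.
Proof. by split. Qed.

Lemma safe_le_trans x y z : safe_le A x y -> safe_le A y z -> safe_le A x z.
Proof.
move=> [E1 S1] [E2 S2]; split; first exact: eqv_trans E1 E2.
by move=> w /S1 /S2.
Qed.

Lemma safe_le_step x b a y yb : safe_det A -> sem_det A -> safe_le A x b ->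
  y \in delta_safe A x a -> yb \in delta_safe A b a -> safe_le A y yb.
Proof.
move=> sd smd [E Sl] Hy Hyb; split.
  exact: sem_step smd E (safe_in_delta Hy) (safe_in_delta Hyb).
move=> v Hv; apply: (safe_uncons_det sd Hyb); apply: Sl; exact: safe_cons Hy Hv.
Qed.

Lemma safe_le_exists x b a y v : safe_le A x b -> y \in delta_safe A x a -> Ls y v ->
  exists2 yb, yb \in delta_safe A b a & Ls yb v.
Proof.
move=> [E Sl] Hy Hv; apply: safe_uncons; apply: Sl; exact: safe_cons Hy Hv.
Qed.

End Basics.


Section Reduce.
Variables (Sigma Q : finType) (A : tNCW Sigma Q).
Notation L := (lang_from A).
Notation Ls := (safe_lang_from A).
Definition live (y : Q) := exists w, Ls y w.

Variables (S : {set Q}) (h : Q -> Q).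
Hypothesis sd : safe_det A.
Hypothesis smd : sem_det A.
Hypothesis hS : forall y, y \in S -> h y \notin S.
Hypothesis hle : forall y, y \in S -> safe_le A y (h y).
Hypothesis hback : forall y p a w, y \in S -> p \notin S -> y \in delta_safe A p a ->
  live y -> Ls (h y) w -> Ls y w.

Notation QB := {x : Q | x \notin S}.
Definition hv (y : Q) : Q := if y \in S then h y else y.
Lemma hv_notin y : hv y \notin S.
Proof. rewrite /hv; case: ifP => [/hS //|->] //. Qed.
Definition hh (y : Q) : QB := exist _ (hv y) (hv_notin y).
Lemma hv_le y : safe_le A y (hv y).
Proof. rewrite /hv; case: ifP => [/hle //|_]; exact: safe_le_refl. Qed.
Lemma hv_back y (t : QB) a w : y \in delta_safe A (val t) a -> live y -> Ls (hv y) w -> Ls y w.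
Proof. rewrite /hv; case: ifP => // yS Hy Hl; exact: (hback yS (valP t) Hy Hl). Qed.

Definition deltaB (t : QB) (a : Sigma) : {set QB} :=
  [set t' | pb (exists2 y, y \in delta A (val t) a & equiv_st A y (val t'))].
Definition alphaB (t : QB) (a : Sigma) (t' : QB) : bool :=
  ~~ pb (exists y, [/\ y \in delta_safe A (val t) a, live y & hh y = t']).

Lemma hh_in t a y : y \in delta A (val t) a -> hh y \in deltaB t a.
Proof. move=> Hy; rewrite inE; apply/pbP; exists y => //; exact: (hv_le y).1. Qed.

Lemma deltaB_ne t a : deltaB t a != set0.
Proof.
have /set0Pn [y Hy] := delta_ne A (val t) a.
apply/set0Pn; exists (hh y); exact: hh_in.
Qed.

Definition B : tNCW Sigma QB := @TNCW Sigma QB (hh (q0 A)) deltaB alphaB deltaB_ne.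

Lemma Lsafe_lang x w : Ls x w -> L x w.
Proof. by move=> [r [Hr Hs]]; exists r; split => //; exists 0 => i _; apply: Hs. Qed.

Lemma B_safe_to_A (r : nat -> QB) (w : nat -> Sigma) :
  (forall i, ~~ alphaB (r i) (w i) (r i.+1)) -> Ls (val (r 0)) w.
Proof.
move=> Hs.
pose P (i : nat) (x z : Q) := (z \in delta_safe A x (w i)) && pb (forall v, Ls z v <-> Ls (val (r i.+1)) v).
pose fix ra i := if i is j.+1 then odflt (ra j) [pick z | P j (ra j) z] else val (r 0).
have step : forall i x, (forall v, Ls x v <-> Ls (val (r i)) v) -> exists z, P i x z.
  move=> i x Ix; have := Hs i; rewrite /alphaB negbK => /pbP [y [Hy [v0 Hv0] Eh]].
  have Ey : forall v, Ls y v <-> Ls (val (r i.+1)) v.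
    move=> v; rewrite -Eh /=; split; first exact: (hv_le y).2.
    by apply: (hv_back Hy); exists v0.
  have := safe_cons Hy Hv0 => /Ix /safe_uncons [z Hz Hzv].
  exists z; rewrite /P Hz /=; apply/pbP => v; rewrite -Ey; split.
    move=> Hv; have := safe_cons Hz Hv => /Ix; exact: safe_uncons_det sd Hy.
  move=> Hv; have := safe_cons Hy Hv => /Ix; exact: safe_uncons_det sd Hz.
have pickS : forall i, (exists z, P i (ra i) z) -> P i (ra i) (ra i.+1).
  move=> i [z1 Hz]; change (P i (ra i) (odflt (ra i) [pick z | P i (ra i) z])).
  case: pickP => [z //|H0]; by move: (H0 z1); rewrite Hz.
have inv : forall i, (forall v, Ls (ra i) v <-> Ls (val (r i)) v) /\ P i (ra i) (ra i.+1).
  elim=> [|i [IH HP]].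
    split=> //; apply: pickS; exact: step 0 _ (fun v => conj id id).
  have Ii : forall v, Ls (ra i.+1) v <-> Ls (val (r i.+1)) v.
    by move: HP => /andP [_ /pbP].
  split; first exact: Ii.
  apply: pickS; exact: step i.+1 _ Ii.
exists ra; split; first split=> //.
  by move=> i; have [_ /andP [H _]] := inv i; exact: safe_in_delta H.
by move=> i; have [_ /andP [H _]] := inv i; move: H; rewrite inE => /andP [].
Qed.

Lemma B_to_A w : lang B w -> lang A w.
Proof.
move=> [r [[r0 rr] [N HN]]].
have HsN : Ls (val (r N)) (fun j => w (N + j)).
  have := @B_safe_to_A (fun j => r (N + j)) (fun j => w (N + j)).
  rewrite addn0; apply=> i; rewrite addnS; apply: HN; exact: leq_addr.
have back : forall d i, i + d = N -> L (val (r i)) (fun j => w (i + j)).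
  elim=> [|d IH] i Hi.
    by rewrite addn0 in Hi; subst i; apply: Lsafe_lang.
  have Hi1 : i.+1 + d = N by rewrite addSnnS.
  have := IH _ Hi1.
  have := rr i; rewrite inE => /pbP [y Hy Ey] /Ey Hly.
  have := lang_cons Hy Hly; apply: lang_ext => -[|j] /=; first by rewrite addn0.
  by rewrite addSnnS.
have := back N 0 (add0n N); rewrite r0 /= => H.
have /(hv_le (q0 A)).1 := H.
by apply: lang_ext.
Qed.

Lemma A_in_B_run w (r : nat -> QB) : r 0 = hh (q0 A) -> (forall i, r i.+1 \in deltaB (r i) (w i)) ->
  accepting_run B w r -> lang B w.
Proof. by move=> r0 rr acc; exists r; split. Qed.

Lemma B_strat : GFG_state A (q0 A) -> exists g : seq Sigma -> QB,
  [/\ g [::] = hh (q0 A), (forall u a, g (rcons u a) \in deltaB (g u) a) &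
      (forall w, lang A w -> accepting_run B w (fun i => g (Defs.prefix w i)))].
Proof.
move=> [f [f0 [fstep facc]]].
pose gstep (u : seq Sigma) (gu : QB) (a : Sigma) : QB :=
  if ~~ alpha A (f u) a (f (rcons u a)) then
    odflt (hh (f (rcons u a))) [pick t | (t \in deltaB gu a) && ~~ alphaB gu a t]
  else hh (f (rcons u a)).
pose fix grev (l : seq Sigma) : QB :=
  if l is a :: l' then gstep (rev l') (grev l') a else hh (q0 A).
pose g u := grev (rev u).
have gS : forall u a, g (rcons u a) = gstep u (g u) a.
  by move=> u a; rewrite /g rev_rcons /= revK.
have g0 : g [::] = hh (q0 A) by [].
have inv : forall u, safe_le A (f u) (val (g u)).
  elim/last_ind=> [|u a IH]; first by rewrite g0 f0; exact: hv_le.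
  rewrite gS /gstep; case: ifP => Hsafe; last exact: hv_le.
  case: pickP => [t /andP [_ Ht]|_] /=; last exact: hv_le.
  move: Ht; rewrite /alphaB negbK => /pbP [y [Hy _ <-]].
  apply: safe_le_trans (hv_le y).
  apply: safe_le_step sd smd IH _ Hy.
  by rewrite inE fstep Hsafe.
have gmem : forall u a, g (rcons u a) \in deltaB (g u) a.
  move=> u a; rewrite gS /gstep.
  have dflt : hh (f (rcons u a)) \in deltaB (g u) a.
    have /set0Pn [y Hy] := delta_ne A (val (g u)) a.
    rewrite inE; apply/pbP; exists y => //.
    apply: (eqv_trans _ (hv_le (f (rcons u a))).1).
    exact: sem_step smd (eqv_sym (inv u).1) Hy (fstep u a).
  case: ifP => _ //; case: pickP => [t /andP [Ht _]|_] //.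
exists g; split => //.
move=> w /facc [N HN]; exists N => i Hi.
rewrite /Defs.prefix mkseqS gS /gstep.
have Hf := HN i Hi; rewrite /Defs.prefix mkseqS in Hf; rewrite Hf.
set u := mkseq w i; set a := w i.
have Hd : f (rcons u a) \in delta_safe A (f u) a by rewrite inE fstep Hf.
have Hlive : Ls (f (rcons u a)) (fun j => w (i.+1 + j)).
  exists (fun j => f (Defs.prefix w (i.+1 + j))); split.
    split; first by rewrite addn0 /Defs.prefix mkseqS.
    by move=> j; rewrite addnS /Defs.prefix mkseqS; apply: fstep.
  move=> j; rewrite addnS; apply: HN; rewrite addSn; apply: leqW.
  exact: leq_trans Hi (leq_addr _ _).
have [yb Hyb Hlyb] := safe_le_exists (inv u) Hd Hlive.
case: pickP => [t /andP [_ Ht] //|H0].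
have := H0 (hh yb); rewrite hh_in ?(safe_in_delta Hyb) //= /alphaB negbK.
suff -> : pb (exists y, [/\ y \in delta_safe A (val (g u)) a, live y & hh y = hh yb]) by [].
by apply/pbP; exists yb; split => //; exists (fun j => w (i.+1 + j)).
Qed.

Lemma reduce_contra y0 : nice A -> minimal_GFG A -> y0 \in S -> False.
Proof.
move=> [_ [gfg _]] min Hy0.
have [g [g0 gm gacc]] := B_strat (gfg (q0 A)).
have AB : forall w, lang A w -> lang B w.
  move=> w Hw; exists (fun i => g (Defs.prefix w i)); split; last exact: gacc.
  by split=> // i; rewrite /Defs.prefix mkseqS; apply: gm.
have GB : GFG B.
  exists g; split=> //; split=> //.
  by move=> w /B_to_A; apply: gacc.
have := min _ B GB (fun w => conj (@B_to_A w) (AB w)).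
rewrite card_sig.
have -> : #|[pred x | x \notin S]| = #|~: S| by apply: eq_card => x; rewrite !inE.
have := cardsC S.
have : 0 < #|S| by apply/card_gt0P; exists y0.
move=> H1 <-; rewrite leqNgt; move/negP; apply.
by rewrite -[X in X < _]add0n ltn_add2r.
Qed.

End Reduce.


Section Main.
Variables (Sigma Q : finType) (A : tNCW Sigma Q).
Notation L := (lang_from A).
Notation Ls := (safe_lang_from A).
Notation E := (safe_edge A).

Lemma edge_first z y : z != y -> connect E z y -> exists m, E z m /\ connect E m y.
Proof.
move=> nzy /connectP [[|m l] Hp Hl]; first by rewrite Hl eqxx in nzy.
move: Hp => /= /andP [Hzm Hp]; exists m; split=> //.
by apply/connectP; exists l.
Qed.

Lemma live_closed (P : {set Q}) :
  (forall x, x \in P -> exists y a, y \in P /\ y \in delta_safe A x a) ->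
  forall x, x \in P -> live A x.
Proof.
move=> HP x Hx; have [y0 [a0 _]] := HP x Hx.
pose nxt z := [pick ya : Q * Sigma | (ya.1 \in P) && (ya.1 \in delta_safe A z ya.2)].
have Hn : forall z, z \in P -> exists ya, nxt z = Some ya /\ (ya.1 \in P) && (ya.1 \in delta_safe A z ya.2).
  move=> z Hz; rewrite /nxt; case: pickP => [ya Hya|H0]; first by exists ya.
  have [y [a [Hy Hya]]] := HP z Hz; by move: (H0 (y, a)); rewrite /= Hy Hya.
pose fix r i := if i is j.+1 then (odflt (x, a0) (nxt (r j))).1 else x.
pose w i := (odflt (x, a0) (nxt (r i))).2.
have rP : forall i, r i \in P.
  elim=> [//|i IH] /=; have [ya [-> /andP [H _]]] := Hn _ IH; exact: H.
have rS : forall i, r i.+1 \in delta_safe A (r i) (w i).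
  move=> i; rewrite /w /=; have [ya [-> /andP [_ H]]] := Hn _ (rP i); exact: H.
exists w, r; split; first split=> // i; first exact: safe_in_delta (rS i).
by move=> i; have := rS i; rewrite inE => /andP [].
Qed.

Lemma connect_edge x y : E x y -> connect E x y.
Proof. exact: connect1. Qed.

Lemma centralized : nice A -> minimal_GFG A -> safe_centralized A.
Proof.
move=> Hn min q s Hle; have [_ [_ [nrm [sd smd]]]] := Hn.
case: (boolP (connect E q s && connect E s q)) => [/andP [] //|Hns].
exfalso.
pose S := [set p | connect E q p && connect E p q].
have qS : q \in S by rewrite inE connect0.
have sS : s \notin S by rewrite inE.
have closedS : forall b y, b \notin S -> E b y -> y \notin S.
  move=> b y bS Hby; apply: contra bS; rewrite !inE => /andP [Hqy Hyq].
  have Hyb := nrm _ _ (connect1 Hby).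
  by rewrite (connect_trans Hqy Hyb) (connect_trans (connect1 Hby) Hyq).
have prop : forall p, p \in S -> p != q -> exists t, t \notin S /\ safe_le A p t.
  move=> p pS pq.
  have allLive : forall z, z \in S -> live A z.
    apply: live_closed => z; rewrite inE => /andP [Hqz Hzq].
    have [m [Hzm Hm]] : exists m, E z m /\ m \in S.
      case: (eqVneq z q) => [->|zq].
        move: pS; rewrite inE => /andP [Hqp Hpq].
        have qp : q != p by rewrite eq_sym.
        have [m [Hqm Hmp]] := edge_first qp Hqp.
        exists m; split=> //; rewrite inE (connect1 Hqm) /=.
        exact: connect_trans Hmp Hpq.
      have [m [Hzm Hmq]] := edge_first zq Hzq.
      exists m; split=> //; rewrite inE Hmq andbT.
      exact: connect_trans Hqz (connect1 Hzm).
    move: Hzm => /existsP [a Ha]; exists m, a; done.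
  have track : forall l x b, path E x l ->
      (forall m, connect E x m -> connect E m (last x l) -> live A m) ->
      safe_le A x b -> b \notin S -> exists t, t \notin S /\ safe_le A (last x l) t.
    elim=> [|m l IH] x b /=; first by move=> _ _ Hxb bS; exists b.
    move=> /andP [Hxm Hp] Hl Hxb bS.
    have [a Ha] := existsP Hxm.
    have [v Hv] : live A m.
      apply: Hl; first exact: connect1.
      by apply/connectP; exists l.
    have [yb Hyb _] := safe_le_exists Hxb Ha Hv.
    apply: (IH m yb Hp).
    - move=> m' Hmm' Hm'l; apply: Hl => //; exact: connect_trans (connect1 Hxm) Hmm'.
    - exact: safe_le_step sd smd Hxb Ha Hyb.
    - apply: closedS bS _; apply/existsP; exists a; exact: Hyb.
  move: (pS); rewrite inE => /andP [/connectP [l Hp Hl] Hpq].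
  rewrite Hl; apply: (track l q s Hp) => // m Hqm Hmp.
  apply: allLive; rewrite inE Hqm /=; rewrite -Hl in Hmp.
  exact: connect_trans Hmp Hpq.
pose h p := if p == q then s else odflt s [pick t | (t \notin S) && pb (safe_le A p t)].
have hP : forall p, p \in S -> h p \notin S /\ safe_le A p (h p).
  move=> p pS; rewrite /h; case: (eqVneq p q) => [->|pq]; first by [].
  case: pickP => [t /andP [tS /pbP Ht]|H0]; first by split.
  have [t [tS Ht]] := prop p pS pq.
  by move: (H0 t); rewrite tS /=; case: pbP => // /(_ Ht).
apply: (@reduce_contra _ _ A S h sd smd (fun y Hy => (hP y Hy).1) (fun y Hy => (hP y Hy).2) _ q Hn min qS).
move=> y p a w yS pS Hy _ _; exfalso.
have Hpy : E p y by apply/existsP; exists a.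
by move: (closedS p y pS Hpy); rewrite yS.
Qed.

Lemma minimal_safe : nice A -> minimal_GFG A -> safe_minimal A.
Proof.
move=> Hn min q s [Eq Ls_eq]; have [_ [_ [_ [sd smd]]]] := Hn.
case: (eqVneq q s) => // qs; exfalso.
pose S := [set q].
have hS : forall y, y \in S -> (fun _ => s) y \notin S.
  by move=> y _; rewrite inE eq_sym.
have hle : forall y, y \in S -> safe_le A y ((fun _ => s) y).
  move=> y; rewrite inE => /eqP ->; split=> // w; apply Ls_eq.
apply: (@reduce_contra _ _ A S (fun _ => s) sd smd hS hle _ q Hn min); last by rewrite inE.
move=> y p a w; rewrite inE => /eqP -> _ _ _; apply Ls_eq.
Qed.

End Main.

Unset Implicit Arguments.

Theorem mainTheorem1 (Sigma Q : finType) (A : tNCW Sigma Q) :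
  nice A -> minimal_GFG A -> safe_centralized A /\ safe_minimal A.
Proof. move=> Hn min; split; [exact: centralized | exact: minimal_safe]. Qed.
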